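(* The theory $\mathsf{MLS}$ (Multi-Level Syllogistic) is convex. That is, for every conjunction $\varphi$ of $\mathsf{MLS}$-literals and every finite nonempty set $\mathcal{E}$ of equalities between set variables, if every set assignment that satisfies $\varphi$ also satisfies $\bigvee \mathcal{E}$, then there is some equality $x = y$ in $\mathcal{E}$ such that every set assignment that satisfies $\varphi$ also satisfies $x = y$.
   Context: $\mathsf{MLS}$ is the quantifier-free propositional closure of atoms of the forms $x=\varnothing$, $x=y$, $x\subseteq y$, $x\in y$, $x=y\setminus z$, $x=y\cup z$, $x=y\cap z$, where $x,y,z$ are set variables; an $\mathsf{MLS}$-literal is such an atom or its negation. A set assignment is a map from a finite set of set variables into the von Neumann universe $\mathcal{V}=\bigcup_{\alpha}\mathcal{V}_\alpha$, with $\mathcal{V}_\alpha=\bigcup_{\beta<\alpha}\mathcal{P}(\mathcal{V}_\beta)$; symbols are interpreted with their usual set-theoretic meaning ($\in$ as membership, $\setminus,\cup,\cap$ as set difference, union, intersection, $=$ as equality, $\subseteq$ as inclusion, $\varnothing$ as the empty set), and propositional connectives as usual. A set assignment whose domain contains the variables of a formula satisfies it if the formula evaluates to true. *)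

(* Defs.v *)
From Stdlib Require Import List.
Import ListNotations.

(* Iterative (well-founded) sets: a set is given by an index type and a
   family of elements. *)
Inductive V : Type :=
  sup : forall (A : Type), (A -> V) -> V.

Fixpoint Veq (x y : V) {struct x} : Prop :=
  match x, y with
  | sup A f, sup B g =>
      (forall a : A, exists b : B, Veq (f a) (g b)) /\
      (forall b : B, exists a : A, Veq (f a) (g b))
  end.

Definition Vin (x y : V) : Prop :=
  match y with
  | sup B g => exists b : B, Veq x (g b)
  end.

Definition var := nat.

Inductive atom : Type :=
  | AEmpty : var -> atom
  | AEq    : var -> var -> atom
  | ASub   : var -> var -> atom
  | AIn    : var -> var -> atom
  | ADiff  : var -> var -> var -> atom
  | AUnion : var -> var -> var -> atom
  | AInter : var -> var -> var -> atom.

Inductive literal : Type :=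
  | Pos : atom -> literal
  | Neg : atom -> literal.

(* A set assignment (total on variables; only the variables of the formula
   matter). *)
Definition assignment := var -> V.

Definition sat_atom (M : assignment) (a : atom) : Prop :=
  match a with
  | AEmpty x => forall w, ~ Vin w (M x)
  | AEq x y => Veq (M x) (M y)
  | ASub x y => forall w, Vin w (M x) -> Vin w (M y)
  | AIn x y => Vin (M x) (M y)
  | ADiff x y z => forall w, Vin w (M x) <-> (Vin w (M y) /\ ~ Vin w (M z))
  | AUnion x y z => forall w, Vin w (M x) <-> (Vin w (M y) \/ Vin w (M z))
  | AInter x y z => forall w, Vin w (M x) <-> (Vin w (M y) /\ Vin w (M z))
  end.

Definition sat_literal (M : assignment) (l : literal) : Prop :=
  match l with
  | Pos a => sat_atom M a
  | Neg a => ~ sat_atom M a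
  end.

Definition sat_conj (M : assignment) (phi : list literal) : Prop :=
  forall l, In l phi -> sat_literal M l.

Definition sat_eq (M : assignment) (e : var * var) : Prop :=
  Veq (M (fst e)) (M (snd e)).

Definition sat_disj (M : assignment) (E : list (var * var)) : Prop :=
  exists e, In e E /\ sat_eq M e.

(* Main.v *)
Require Import Defs.
From Stdlib Require Import List.
From Stdlib Require Import Classical FunctionalExtensionality Inverse_Image.

Lemma Veq_refl s : Veq s s.
Proof. induction s as [A f IH]; simpl; split; intro a; exists a; apply IH. Qed.

Lemma Veq_sym : forall s t, Veq s t -> Veq t s.
Proof.
  induction s as [A f IH]; destruct t as [B g]; simpl; intros [H1 H2]; split.
  - intro b; destruct (H2 b) as [a Ha]; exists a; apply IH; exact Ha.
  - intro a; destruct (H1 a) as [b Hb]; exists b; apply IH; exact Hb.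
Qed.

Lemma Veq_trans : forall s t u, Veq s t -> Veq t u -> Veq s u.
Proof.
  induction s as [A f IH]; destruct t as [B g]; destruct u as [C h]; simpl;
  intros [H1 H2] [H3 H4]; split.
  - intro a; destruct (H1 a) as [b Hb]; destruct (H3 b) as [c Hc];
    exists c; eapply IH; eauto.
  - intro c; destruct (H4 c) as [b Hb]; destruct (H2 b) as [a Ha];
    exists a; eapply IH; eauto.
Qed.

Lemma Vin_compat_l a b c : Veq a b -> Vin a c -> Vin b c.
Proof.
  destruct c as [C h]; simpl; intros H [k Hk]; exists k.
  eapply Veq_trans; [apply Veq_sym; exact H| exact Hk].
Qed.

Lemma Vin_compat_r a b c : Veq b c -> Vin a b -> Vin a c.
Proof.
  destruct b as [B g]; destruct c as [C h]; simpl; intros [H1 _] [j Hj].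
  destruct (H1 j) as [k Hk]; exists k; eapply Veq_trans; eauto.
Qed.

Lemma Veq_ext a b : (forall w, Vin w a <-> Vin w b) -> Veq a b.
Proof.
  destruct a as [A f]; destruct b as [B g]; intro H; simpl; split.
  - intro x. apply (H (f x)). simpl. exists x. apply Veq_refl.
  - intro y. destruct (proj2 (H (g y))) as [x Hx].
    + simpl. exists y. apply Veq_refl.
    + exists x. apply Veq_sym; exact Hx.
Qed.

Lemma Veq_Vin_iff a b : Veq a b -> forall w, Vin w a <-> Vin w b.
Proof.
  intros H w; split; intro Hw.
  - eapply Vin_compat_r; eauto.
  - eapply Vin_compat_r; [apply Veq_sym; exact H| exact Hw].
Qed.

Lemma Acc_Veq t : Acc Vin t -> forall y, Veq y t -> Acc Vin y.
Proof.
  intros Ht y Hy; constructor; intros u Hu.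
  apply Ht. eapply Vin_compat_r; eauto.
Qed.

Lemma Vin_wf : well_founded Vin.
Proof.
  intro s; induction s as [A f IH]; constructor; intros y [a Ha].
  eapply Acc_Veq; [apply IH| exact Ha].
Qed.

Fixpoint Le (s t : V) {struct s} : Prop :=
  match s, t with
  | sup A f, sup B g => forall a, exists b, Le (f a) (g b)
  end.

Definition Lt (s t : V) : Prop :=
  match t with sup B g => exists b, Le s (g b) end.

Lemma Le_refl s : Le s s.
Proof. induction s as [A f IH]; simpl; intro a; exists a; apply IH. Qed.

Lemma Le_trans : forall s t u, Le s t -> Le t u -> Le s u.
Proof.
  induction s as [A f IH]; destruct t as [B g]; destruct u as [C h]; simpl;
  intros H1 H2 a.
  destruct (H1 a) as [b Hb]; destruct (H2 b) as [c Hc]; exists c; eauto.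
Qed.

Lemma Veq_Le : forall s t, Veq s t -> Le s t.
Proof.
  induction s as [A f IH]; destruct t as [B g]; simpl; intros [H1 _] a.
  destruct (H1 a) as [b Hb]; exists b; auto.
Qed.

Lemma Lt_Le : forall s t, Lt s t -> Le s t.
Proof.
  induction s as [A f IH]; destruct t as [B g]; simpl; intros [b Hb] a.
  exists b. destruct (g b) as [C h] eqn:E. simpl in Hb.
  apply IH. simpl. exact (Hb a).
Qed.

Lemma Lt_irrefl : forall s, ~ Lt s s.
Proof.
  induction s as [A f IH]; simpl; intros [a Ha].
  apply (IH a). destruct (f a) as [C h] eqn:E. simpl in Ha |- *.
  destruct (Ha a) as [c Hc]. exists c. rewrite E in Hc. exact Hc.
Qed.

Lemma Lt_Le_trans a b c : Lt a b -> Le b c -> Lt a c.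
Proof.
  destruct b as [B g]; destruct c as [C h]; simpl; intros [b0 H0] H.
  destruct (H b0) as [c0 Hc]; exists c0; eapply Le_trans; eauto.
Qed.

Lemma Vin_Lt e t : Vin e t -> Lt e t.
Proof.
  destruct t as [B g]; simpl; intros [b Hb]; exists b; apply Veq_Le; exact Hb.
Qed.

Fixpoint zn (n : nat) : V :=
  match n with
  | 0 => sup False (fun f => match f with end)
  | S n => sup unit (fun _ => zn n)
  end.

Definition Omega : V := sup nat zn.

Definition T (p : var -> Prop) : V :=
  sup (option {x : var | p x})
      (fun o => match o with None => Omega | Some (exist _ x _) => zn x end).

Definition R0 : V := sup unit (fun _ => Omega).

Lemma zn_inj : forall x y, Veq (zn x) (zn y) -> x = y.
Proof.
  induction x; destruct y; simpl; intros [H1 H2]; auto.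
  - destruct (H2 tt) as [[] _].
  - destruct (H1 tt) as [[] _].
  - destruct (H1 tt) as [u Hu]. f_equal. auto.
Qed.

Lemma zn_not_Omega x : ~ Veq (zn x) Omega.
Proof.
  intro H. assert (Hl : Lt (zn x) Omega) by (apply Vin_Lt; simpl; exists x; apply Veq_refl).
  apply (Lt_irrefl (zn x)). eapply Lt_Le_trans; [exact Hl|].
  apply Veq_Le, Veq_sym; exact H.
Qed.

Lemma T_Le_R0 p : Le (T p) R0.
Proof.
  simpl. intros o; exists tt. destruct o as [[x hx]|].
  - apply Lt_Le. apply Vin_Lt. simpl. exists x. apply Veq_refl.
  - apply Le_refl.
Qed.

Lemma T_inj p q : Veq (T p) (T q) -> forall x, p x -> q x.
Proof.
  intros H x hx.
  assert (Hin : Vin (zn x) (T q)).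
  { eapply Vin_compat_r; [exact H|]. simpl. exists (Some (exist _ x hx)). exact (Veq_refl (zn x)). }
  simpl in Hin. destruct Hin as [[[y hy]|] Hy].
  - apply zn_inj in Hy; subst; exact hy.
  - exfalso; eapply zn_not_Omega; eauto.
Qed.

Definition realized (phi : list literal) (p : var -> Prop) : Prop :=
  exists N, sat_conj N phi /\ exists e, forall x, p x <-> Vin e (N x).

Definition Rv (M0 : assignment) (z' z : var) : Prop := Vin (M0 z') (M0 z).

Lemma Rv_wf M0 : well_founded (Rv M0).
Proof. unfold Rv. apply wf_inverse_image. apply Vin_wf. Qed.

Definition MF (phi : list literal) (M0 : assignment) (z : var)
  (rec : forall z', Rv M0 z' z -> V) : V :=
  sup ({z' : var | Rv M0 z' z} + {p : var -> Prop | realized phi p /\ p z})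
      (fun i => match i with
                | inl (exist _ z' h) => rec z' h
                | inr (exist _ p _) => T p
                end).

Definition Mc (phi : list literal) (M0 : assignment) : assignment :=
  Fix (Rv_wf M0) (fun _ => V) (MF phi M0).

Lemma Mc_unfold phi M0 z : Mc phi M0 z = MF phi M0 z (fun z' _ => Mc phi M0 z').
Proof.
  unfold Mc. apply (Fix_eq (Rv_wf M0) (fun _ => V) (MF phi M0)). intros x f g H. unfold MF. f_equal.
  apply functional_extensionality. intros [[z' h]|[p hp]]; auto.
Qed.

Lemma Vin_Mc phi M0 w z :
  Vin w (Mc phi M0 z) <->
  (exists z', Rv M0 z' z /\ Veq w (Mc phi M0 z')) \/
  (exists p, (realized phi p /\ p z) /\ Veq w (T p)).
Proof.
  rewrite Mc_unfold. unfold MF. simpl. split.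
  - intros [[[z' h]|[p hp]] H].
    + left; exists z'; auto.
    + right; exists p; auto.
  - intros [[z' [h H]]|[p [hp H]]].
    + exists (inl (exist _ z' h)); auto.
    + exists (inr (exist _ p hp)); auto.
Qed.

Lemma Mc_big phi M0 (HM0 : sat_conj M0 phi) w z :
  Vin w (Mc phi M0 z) -> Lt R0 (Mc phi M0 z).
Proof.
  intro Hw.
  assert (Hp : exists p, realized phi p /\ p z).
  { apply Vin_Mc in Hw. destruct Hw as [[z' [h _]]|[p [hp _]]].
    - exists (fun y => Vin (M0 z') (M0 y)). split; [|exact h].
      exists M0; split; [exact HM0|]. exists (M0 z'); tauto.
    - exists p; exact hp. }
  destruct Hp as [p hp].
  rewrite Mc_unfold. unfold MF. simpl. exists (inr (exist _ p hp)).
  intros _. exists None. exact (Le_refl Omega).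
Qed.

Lemma T_ne_Mc phi M0 (HM0 : sat_conj M0 phi) p z : ~ Veq (T p) (Mc phi M0 z).
Proof.
  intro H.
  assert (Hin : Vin Omega (Mc phi M0 z)).
  { eapply Vin_compat_r; [exact H|]. simpl. exists None. exact (Veq_refl Omega). }
  apply Mc_big in Hin; [|exact HM0].
  apply (Lt_irrefl R0). eapply Lt_Le_trans; [exact Hin|].
  eapply Le_trans; [apply Veq_Le, Veq_sym; exact H| apply T_Le_R0].
Qed.

Lemma T_profile phi M0 (HM0 : sat_conj M0 phi) p :
  realized phi p -> forall y, Vin (T p) (Mc phi M0 y) <-> p y.
Proof.
  intros Hr y; split; intro H.
  - apply Vin_Mc in H. destruct H as [[z' [_ H]]|[q [[_ hq] H]]].
    + exfalso; eapply T_ne_Mc; eauto.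
    + eapply T_inj; [apply Veq_sym; exact H| exact hq].
  - apply Vin_Mc. right. exists p. split; [split; auto| apply Veq_refl].
Qed.

Lemma L3 phi M0 (HM0 : sat_conj M0 phi) N (HN : sat_conj N phi) e :
  exists w, forall x, Vin w (Mc phi M0 x) <-> Vin e (N x).
Proof.
  exists (T (fun x => Vin e (N x))). apply T_profile; auto.
  exists N; split; auto. exists e; tauto.
Qed.

Lemma L3' phi M0 (HM0 : sat_conj M0 phi) a b :
  Veq (Mc phi M0 a) (Mc phi M0 b) ->
  forall N, sat_conj N phi -> Veq (N a) (N b).
Proof.
  intros H N HN. apply Veq_ext. intro e.
  destruct (L3 phi M0 HM0 N HN e) as [w Hw].
  rewrite <- !Hw. apply Veq_Vin_iff; exact H.
Qed.

Lemma L2 phi M0 (HM0 : sat_conj M0 phi) w :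
  (forall x, ~ Vin w (Mc phi M0 x)) \/
  (exists N e, sat_conj N phi /\ forall x, Vin w (Mc phi M0 x) <-> Vin e (N x)).
Proof.
  destruct (classic (exists x, Vin w (Mc phi M0 x))) as [[x Hx]|Hn].
  - right. apply Vin_Mc in Hx. destruct Hx as [[z' [h H]]|[p [[Hr hp] H]]].
    + exists M0, (M0 z'). split; [exact HM0|]. intro y. split; intro Hy.
      * apply Vin_Mc in Hy. destruct Hy as [[z'' [h' H']]|[q [_ H']]].
        -- assert (E : Veq (M0 z') (M0 z'')).
           { apply (L3' phi M0 HM0); auto.
             eapply Veq_trans; [apply Veq_sym; exact H| exact H']. }
           eapply Vin_compat_l; [apply Veq_sym; exact E| exact h'].
        -- exfalso. apply (T_ne_Mc phi M0 HM0 q z').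
           eapply Veq_trans; [apply Veq_sym; exact H'| exact H].
      * apply Vin_Mc. left. exists z'. auto.
    + destruct Hr as [N [HN [e He]]]. exists N, e. split; [exact HN|].
      intro y. rewrite <- He.
      split; intro Hy.
      * apply (T_profile phi M0 HM0 p); [exists N; split; auto; exists e; auto|].
        eapply Vin_compat_l; [exact H| exact Hy].
      * eapply Vin_compat_l; [apply Veq_sym; exact H|].
        apply (T_profile phi M0 HM0 p); auto. exists N; split; auto; exists e; auto.
  - left. intros x Hx. apply Hn. exists x; exact Hx.
Qed.

Definition boolean (a : atom) : Prop :=
  match a with AIn _ _ => False | _ => True end.

Lemma pos_transfer phi M0 (HM0 : sat_conj M0 phi) a :
  boolean a -> (forall N, sat_conj N phi -> sat_atom N a) ->
  sat_atom (Mc phi M0) a.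
Proof.
  intros Hb Hall.
  destruct a; simpl in Hb |- *; try contradiction.
  - intros w Hw. destruct (L2 phi M0 HM0 w) as [H|[N [e [HN H]]]].
    + eapply H; eauto.
    + rewrite H in Hw. exact (Hall N HN e Hw).
  - apply Veq_ext. intro w. destruct (L2 phi M0 HM0 w) as [H|[N [e [HN H]]]].
    + split; intro Hw; exfalso; eapply H; eauto.
    + rewrite !H. apply Veq_Vin_iff. exact (Hall N HN).
  - intros w. destruct (L2 phi M0 HM0 w) as [H|[N [e [HN H]]]].
    + intro Hw; exfalso; eapply H; eauto.
    + rewrite !H. exact (Hall N HN e).
  - intros w. destruct (L2 phi M0 HM0 w) as [H|[N [e [HN H]]]].
    + pose proof (H v); pose proof (H v0); pose proof (H v1); tauto.
    + rewrite !H. exact (Hall N HN e).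
  - intros w. destruct (L2 phi M0 HM0 w) as [H|[N [e [HN H]]]].
    + pose proof (H v); pose proof (H v0); pose proof (H v1); tauto.
    + rewrite !H. exact (Hall N HN e).
  - intros w. destruct (L2 phi M0 HM0 w) as [H|[N [e [HN H]]]].
    + pose proof (H v); pose proof (H v0); pose proof (H v1); tauto.
    + rewrite !H. exact (Hall N HN e).
Qed.

Lemma neg_transfer phi M0 (HM0 : sat_conj M0 phi) a :
  boolean a -> sat_atom (Mc phi M0) a -> sat_atom M0 a.
Proof.
  intros Hb Hs.
  destruct a; simpl in Hb |- *; try contradiction.
  - intros e He. destruct (L3 phi M0 HM0 M0 HM0 e) as [w Hw].
    apply (Hs w). apply Hw. exact He.
  - exact (L3' phi M0 HM0 _ _ Hs M0 HM0).
  - intros e. destruct (L3 phi M0 HM0 M0 HM0 e) as [w Hw].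
    specialize (Hs w). rewrite !Hw in Hs. exact Hs.
  - intros e. destruct (L3 phi M0 HM0 M0 HM0 e) as [w Hw].
    specialize (Hs w). rewrite !Hw in Hs. exact Hs.
  - intros e. destruct (L3 phi M0 HM0 M0 HM0 e) as [w Hw].
    specialize (Hs w). rewrite !Hw in Hs. exact Hs.
  - intros e. destruct (L3 phi M0 HM0 M0 HM0 e) as [w Hw].
    specialize (Hs w). rewrite !Hw in Hs. exact Hs.
Qed.

Lemma in_transfer phi M0 (HM0 : sat_conj M0 phi) x y :
  Vin (Mc phi M0 x) (Mc phi M0 y) <-> Vin (M0 x) (M0 y).
Proof.
  split; intro H.
  - apply Vin_Mc in H. destruct H as [[z' [h H]]|[p [_ H]]].
    + eapply Vin_compat_l; [|exact h]. apply Veq_sym.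
      exact (L3' phi M0 HM0 _ _ H M0 HM0).
    + exfalso. apply (T_ne_Mc phi M0 HM0 p x). apply Veq_sym; exact H.
  - apply Vin_Mc. left. exists x. split; [exact H| apply Veq_refl].
Qed.

Lemma Mc_sat phi M0 (HM0 : sat_conj M0 phi) : sat_conj (Mc phi M0) phi.
Proof.
  intros l Hl. destruct l as [a|a]; simpl.
  - destruct a as [x|x y|x y|x y|x y z|x y z|x y z];
      try (apply (pos_transfer phi M0 HM0); [exact I|intros N HN; exact (HN _ Hl)]).
    apply in_transfer; auto. exact (HM0 _ Hl).
  - intro Hs. apply (HM0 _ Hl). simpl.
    destruct a as [x|x y|x y|x y|x y z|x y z|x y z];
      try (apply (neg_transfer phi M0 HM0); [exact I|exact Hs]).
    apply (in_transfer phi M0 HM0); exact Hs.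
Qed.

Theorem theorem12 (phi : list literal) (E : list (var * var)) :
  E <> nil ->
  (forall M : assignment, sat_conj M phi -> sat_disj M E) ->
  exists e, In e E /\ (forall M : assignment, sat_conj M phi -> sat_eq M e).
Proof.
  intros HE Hd.
  destruct (classic (exists M0, sat_conj M0 phi)) as [[M0 HM0]|Hn].
  - destruct (Hd _ (Mc_sat phi M0 HM0)) as [e [He Hs]].
    exists e; split; [exact He|]. intros N HN.
    exact (L3' phi M0 HM0 _ _ Hs N HN).
  - destruct E as [|e E']; [congruence|].
    exists e; split; [left; reflexivity|]. intros N HN. exfalso; apply Hn; eauto.
Qed.
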